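(* Let $q$ be a power of an odd prime $p$, let $a,b\in\mathbb{F}_q$ with $b\ne0$, and let $n\ge2$ be an integer. Let $r\ge0$ be such that $p^r$ divides $n+1$ but $p^{r+1}$ does not, and let $m\ge0$ be defined by $n+1=p^r(m+1)$. Assume $r\ge1$. Let $\mu\in\mathbb{F}_{q^2}$ with $\mu^2=-1$. If $m>0$, then $\hat C_n(a,b)$ is LCD if and only if $$a/b\notin\{-\mu/b+2,\,-\mu/b-2,\,\mu/b+2,\,\mu/b-2\}\cup\{-\mu/b+\theta^i+\theta^{-i}:1\le i\le m\}\cup\{\mu/b+\theta^i+\theta^{-i}:1\le i\le m\},$$ where $\theta\in\overline{\mathbb{F}}_q$ is a primitive $2(m+1)$-th root of unity. If $m=0$, then $\hat C_n(a,b)$ is LCD if and only if $a/b\notin\{-\mu/b+2,\,-\mu/b-2,\,\mu/b+2,\,\mu/b-2\}$.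
   Context: For $a,b\in\mathbb{F}_q$ and $n\ge 2$, $\hat T_n(a,b)$ denotes the $n\times n$ symmetric tridiagonal Toeplitz matrix over $\mathbb{F}_q$ with all diagonal entries equal to $a$, all entries on the first super- and sub-diagonals equal to $b$, and all other entries $0$. $\hat C_n(a,b)$ is the $[2n,n]$ linear code over $\mathbb{F}_q$ with generator matrix $[I_n\mid \hat T_n(a,b)]$. A linear code $C$ is LCD if $C\cap C^\perp=\{0\}$ (Euclidean dual). *)

(* Defs.v *)
From HB Require Import structures.
From mathcomp Require Import all_boot all_order all_algebra all_field.
Set Implicit Arguments. Unset Strict Implicit. Unset Printing Implicit Defensive.
Import GRing.Theory.
Local Open Scope ring_scope.

Definition hatT (F : ringType) (n : nat) (a b : F) : 'M[F]_n :=
  \matrix_(i < n, j < n)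
    if i == j then a
    else if (i.+1 == j :> nat) || (j.+1 == i :> nat) then b else 0.

(* Generator matrix [I_n | \hat T_n(a,b)] of the [2n,n] code \hat C_n(a,b). *)
Definition hatG (F : ringType) (n : nat) (a b : F) : 'M[F]_(n, n + n) :=
  row_mx 1%:M (hatT n a b).

(* The linear code generated (row space) by G is represented by G itself
   (mxalgebra row-space semantics); its Euclidean dual is the left kernel
   of G^T, i.e. { v | v *m G^T = 0 }. *)
Definition dual_code (F : fieldType) (k N : nat) (G : 'M[F]_(k, N)) : 'M[F]_N :=
  kermx G^T.

Definition is_LCD (F : fieldType) (k N : nat) (G : 'M[F]_(k, N)) : Prop :=
  (G :&: dual_code G)%MS = 0.

(* Main.v *)
Require Import Defs.
From HB Require Import structures.
From mathcomp Require Import all_boot all_order all_algebra all_field.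
From mathcomp Require Import ring zify.
Set Implicit Arguments. Unset Strict Implicit.
Import GRing.Theory.
Local Open Scope ring_scope.


Fixpoint spair (R : pzRingType) (c : R) (k : nat) : R * R :=
  match k with
  | 0 => (0, 1)
  | k'.+1 => ((spair c k').2, c * (spair c k').2 - (spair c k').1)
  end.
Definition sq (R : pzRingType) (c : R) k := (spair c k).1.
Arguments sq {R}.

Lemma sq0 (R : pzRingType) (c : R) : sq c 0 = 0. Proof. by []. Qed.
Lemma sq1 (R : pzRingType) (c : R) : sq c 1 = 1. Proof. by []. Qed.
Lemma sqS (R : pzRingType) (c : R) k : sq c k.+2 = c * sq c k.+1 - sq c k.
Proof. by []. Qed.

Lemma sq_ind2 (P : nat -> Prop) : P 0%N -> P 1%N ->
  (forall k, P k -> P k.+1 -> P k.+2) -> forall k, P k.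
Proof.
move=> H0 H1 HS k; suff: P k /\ P k.+1 by case.
elim: k => [|k [IH1 IH2]]; first by split.
by split=> //; apply: HS.
Qed.

Lemma sq_horner (K : comNzRingType) (c : K) k : (sq ('X : {poly K}) k).[c] = sq c k.
Proof.
elim/sq_ind2: k => [||k IH1 IH2]; first by rewrite sq0 horner0.
  by rewrite sq1 hornerC.
by rewrite !sqS hornerD hornerN hornerM hornerX IH1 IH2.
Qed.

Lemma sq_size (K : idomainType) k : size (sq ('X : {poly K}) k.+1) = k.+1
  /\ lead_coef (sq ('X : {poly K}) k.+1) = 1.
Proof.
elim/sq_ind2: k => [||k [IHs1 IHl1] [IHs2 IHl2]].
- by rewrite sq1 size_poly1 lead_coef1.
- by rewrite sqS sq1 sq0 mulr1 subr0 size_polyX lead_coefX.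
have Hne : sq ('X : {poly K}) k.+2 != 0 by rewrite -size_poly_eq0 IHs2.
have Hs1 : size ('X * sq ('X : {poly K}) k.+2) = k.+3 by rewrite mulrC size_mulX // IHs2.
set P2 := 'X * sq ('X : {poly K}) k.+2.
set P1 := - sq ('X : {poly K}) k.+1.
have Hlt : (size P1 < size P2)%N.
  by rewrite size_polyN Hs1 IHs1.
rewrite sqS -/P2 -/P1 size_polyDl // lead_coefDl // Hs1; split=> //.
by rewrite /P2 mulrC lead_coefMX IHl2.
Qed.


Lemma sq_z (K : comNzRingType) (z y : K) k : z * y = 1 ->
  (z - y) * sq (z + y) k = z ^+ k - y ^+ k.
Proof.
move=> Hzy; elim/sq_ind2: k => [||k IH1 IH2].
- by rewrite sq0 mulr0 !expr0 subrr.
- by rewrite sq1 mulr1 !expr1.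
rewrite sqS mulrBr mulrCA IH2 IH1.
have -> : z ^+ k.+2 - y ^+ k.+2 = (z + y) * (z * z ^+ k - y * y ^+ k) - (z ^+ k - y ^+ k)
   - (z * y - 1) * (z ^+ k - y ^+ k) by rewrite !exprS; ring.
by rewrite Hzy subrr mul0r subr0 !exprS.
Qed.

Lemma sq_neg (K : comNzRingType) (c : K) k : sq (- c) k = (-1) ^+ k.+1 * sq c k.
Proof.
elim/sq_ind2: k => [||k IH1 IH2].
- by rewrite !sq0 mulr0.
- by rewrite !sq1 mulr1 expr2 mulrNN mulr1.
rewrite !sqS IH1 IH2 !exprS; ring.
Qed.

Lemma sq_two (K : comNzRingType) k : sq (2 : K) k = k%:R.
Proof.
elim/sq_ind2: k => [||k IH1 IH2].
- by rewrite sq0.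
- by rewrite sq1.
rewrite sqS IH1 IH2 -[k.+2]addn2 -[k.+1]addn1 !natrD; ring.
Qed.

Lemma sq_cassini (K : comNzRingType) (c : K) k :
  sq c k.+1 ^+ 2 - c * sq c k * sq c k.+1 + sq c k ^+ 2 = 1.
Proof.
elim: k => [|k IH]; first by rewrite sq1 sq0 expr1n mulr0 mul0r subr0 expr0n addr0.
by rewrite sqS -IH; ring.
Qed.

Definition Mc (K : pzRingType) (c : K) : 'M[K]_2 :=
  \matrix_(i < 2, j < 2) if i == 0 then (if j == 0 then c else -1) else (if j == 0 then 1 else 0).
Arguments Mc {K}.

Lemma Mc2 (K : comNzRingType) (c : K) : Mc c * Mc c = c *: Mc c - 1.
Proof.
rewrite -mulmxE; apply/matrixP=> i j; rewrite !mxE !big_ord_recl big_ord0 !mxE.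
case: i => [[|[|i]] //= Hi]; case: j => [[|[|j]] //= Hj]; ring.
Qed.

Lemma Mcpow (K : comNzRingType) (c : K) k :
  Mc c ^+ k.+1 = sq c k.+1 *: Mc c - sq c k *: 1.
Proof.
elim: k => [|k IH]; first by rewrite expr1 sq1 sq0 scale1r scale0r subr0.
rewrite exprSr IH mulrBl -!scalerAl mul1r Mc2 sqS scalerBr scalerA.
by rewrite scalerBl mulrC addrAC.
Qed.

Lemma Mcpow10 (K : comNzRingType) (c : K) k : (Mc c ^+ k) 1 0 = sq c k.
Proof.
case: k => [|k]; first by rewrite expr0 sq0 mxE.
by rewrite Mcpow !mxE /= mulr1 mulr0 subr0.
Qed.

Lemma frobD_iter (R : nzRingType) (p : nat) (x y : R) r :
  p \in [pchar R] -> GRing.comm x y ->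
  (x + y) ^+ (p ^ r) = x ^+ (p ^ r) + y ^+ (p ^ r).
Proof.
move=> Hp Hxy; elim: r => [|r IH]; first by rewrite expn0 !expr1.
rewrite expnSr !exprM IH -!(pFrobenius_autE Hp) pFrobenius_autD_comm //.
by apply: commrX; apply/commr_sym; apply: commrX; apply/commr_sym.
Qed.

Lemma frobB_iter (R : nzRingType) (p : nat) (x y : R) r :
  p \in [pchar R] -> GRing.comm x y ->
  (x - y) ^+ (p ^ r) = x ^+ (p ^ r) - y ^+ (p ^ r).
Proof.
move=> Hp Hxy; elim: r => [|r IH]; first by rewrite expn0 !expr1.
rewrite expnSr !exprM IH -!(pFrobenius_autE Hp) pFrobenius_autB_comm //.
by apply: commrX; apply/commr_sym; apply: commrX; apply/commr_sym.
Qed.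

Lemma frob_nat_iter (R : nzRingType) (p : nat) r n :
  p \in [pchar R] -> (n%:R : R) ^+ (p ^ r) = n%:R.
Proof.
move=> Hp; elim: r => [|r IH]; first by rewrite expn0 expr1.
by rewrite expnSr exprM IH -(pFrobenius_autE Hp) pFrobenius_aut_nat.
Qed.

Lemma comm_scale1 (K : comNzRingType) (x : 'M[K]_2) a : GRing.comm x (a *: 1).
Proof. by rewrite /GRing.comm -scalerAr -scalerAl mulr1 mul1r. Qed.

Lemma sq_mul (K : fieldType) (p : nat) (c : K) r k : p \in [pchar K] ->
  sq c (k * p ^ r) = sq c k ^+ (p ^ r) * sq c (p ^ r).
Proof.
move=> Hp.
have HpM : p \in [pchar 'M[K]_2] by rewrite (pchar_lalg 'M[K]_2).
have Hq : (0 < p ^ r)%N by rewrite expn_gt0 prime_gt0 // (pcharf_prime Hp).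
case: k => [|k]; first by rewrite mul0n sq0 expr0n (gtn_eqF Hq) mul0r.
rewrite -Mcpow10 exprM Mcpow frobB_iter //; last exact: comm_scale1.
rewrite !exprZn expr1n !mxE /= mulr0 subr0 Mcpow10 //.
Qed.

Lemma sq_pr_root (K : fieldType) (p : nat) (c : K) r : p \in [pchar K] -> odd p ->
  sq c (p ^ r) = 0 -> c = 2 \/ c = -2.
Proof.
move=> Hp Hodd Hs.
have HpM : p \in [pchar 'M[K]_2] by rewrite (pchar_lalg 'M[K]_2).
have Hq : (0 < p ^ r)%N by rewrite expn_gt0 prime_gt0 // (pcharf_prime Hp).
set q := (p ^ r)%N in Hs Hq *.
have [q' Eq] : exists q', q = q'.+1 by exists q.-1; rewrite prednK.
set e := - sq c q'.
have He2 : e ^+ 2 = 1.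
  have := sq_cassini c q'; rewrite -Eq Hs expr0n /= mulr0 subr0 add0r.
  by rewrite /e sqrrN.
have HMq : Mc c ^+ q = e *: 1 by rewrite Eq Mcpow -Eq Hs scale0r sub0r scaleNr.
set M' := c *: 1 - Mc c.
have HMM' : Mc c * M' = 1.
  by rewrite /M' mulrBr -scalerAr mulr1 Mc2 opprB addrC subrK.
have HcM : GRing.comm (Mc c) M'.
  by rewrite /GRing.comm /M' mulrBr mulrBl -scalerAr -scalerAl mulr1 mul1r.
have HM'q : M' ^+ q = e *: 1.
  have H1 : M' ^+ q * Mc c ^+ q = 1.
    by rewrite -exprMn_comm; [rewrite -HcM HMM' expr1n | apply/commr_sym].
  have H2 : (e *: 1) * (e *: (1 : 'M[K]_2)) = 1.
    by rewrite -scalerAl mul1r scalerA -expr2 He2 scale1r.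
  have H3 : M' ^+ q * (e *: 1) = 1 by rewrite -HMq.
  by rewrite -[LHS]mulr1 -[X in _ * X]H2 mulrA H3 mul1r.
have Hsum : Mc c + M' = c *: 1 by rewrite /M' addrC subrK.
have Hcq : c ^+ q = 2 * e.
  have := frobD_iter r HpM HcM; rewrite -/q Hsum exprZn expr1n HMq HM'q.
  move/matrixP => /(_ 0 0); rewrite !mxE /= mulr1.
  by move=> ->; rewrite mulr1 -mulr2n mulr_natl.
have Heq : e ^+ q = e.
  rewrite /q -(odd_double_half (p ^ r)) oddX Hodd orbT /= add1n exprS -muln2.
  by rewrite mulnC exprM He2 expr1n mulr1.
have H0 : (c - 2 * e) ^+ q = 0.
  rewrite frobB_iter //; last exact: mulrC.
  by rewrite exprMn frob_nat_iter // Heq Hcq subrr.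
have : c - 2 * e == 0 by move/eqP: H0; rewrite expf_eq0 Hq.
rewrite subr_eq0 => /eqP ->.
move/eqP: He2; rewrite sqrf_eq1 => /orP [] /eqP ->; [left | right]; ring.
Qed.


Lemma sq_theta_root (K : fieldType) (m i : nat) (theta : K) :
  (2 * m.+1).-primitive_root theta -> (1 <= i <= m)%N ->
  sq (theta ^+ i + theta ^- i) m.+1 = 0.
Proof.
move=> Hth /andP [Hi1 Him].
have Hz : theta ^+ i != 0 by rewrite expf_neq0 // (prim_root_eq0 Hth) muln_eq0.
set z := theta ^+ i.
have Hzy : z * z^-1 = 1 by rewrite mulfV.
have := sq_z (m.+1) Hzy.
have Hw : (z ^+ m.+1) ^+ 2 = 1.
  rewrite /z -!exprM.
  have -> : (i * (m.+1 * 2) = (2 * m.+1) * i)%N by lia.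
  by rewrite exprM (prim_expr_order Hth) expr1n.
have Hw0 : z ^+ m.+1 != 0 by rewrite expf_neq0.
have Hwi : (z ^+ m.+1)^-1 = z ^+ m.+1.
  by apply: (mulfI Hw0); rewrite mulfV // -expr2 Hw.
rewrite exprVn Hwi subrr => /eqP; rewrite mulf_eq0 => /orP [|/eqP //].
rewrite subr_eq0 => /eqP Hzz.
have : z ^+ 2 = 1 by rewrite expr2 {2}Hzz.
rewrite /z -exprM -(expr0 theta) => /eqP; rewrite (eq_prim_root_expr Hth).
rewrite mod0n modn_small; last by lia.
by rewrite muln_eq0 orbF => /eqP Hi; move: Hi1; rewrite Hi.
Qed.

Lemma theta_inj (K : fieldType) (m i j : nat) (theta : K) :
  (2 * m.+1).-primitive_root theta -> (1 <= i <= m)%N -> (1 <= j <= m)%N ->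
  theta ^+ i + theta ^- i = theta ^+ j + theta ^- j -> i = j.
Proof.
move=> Hth Hi Hj.
have Hne k : theta ^+ k != 0 by rewrite expf_neq0 // (prim_root_eq0 Hth) muln_eq0.
set a := theta ^+ i; set b := theta ^+ j => Hab.
have : (a - b) * (a * b - 1) = 0.
  have Ha := Hne i; have Hb := Hne j.
  have : (a + a^-1) * (a * b) = (b + b^-1) * (a * b) by rewrite Hab.
  have E1 : (a + a^-1) * (a * b) = a * (a * b) + b by field.
  have E2 : (b + b^-1) * (a * b) = b * (a * b) + a by field.
  rewrite E1 E2 => H.
  have -> : (a - b) * (a * b - 1) = (a * (a * b) + b) - (b * (a * b) + a) by ring.
  by rewrite H subrr.
move/eqP; rewrite mulf_eq0 !subr_eq0 => /orP [] /eqP.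
  move/eqP; rewrite /a /b (eq_prim_root_expr Hth) !modn_small; try lia.
rewrite -exprD -(expr0 theta) => /eqP; rewrite (eq_prim_root_expr Hth).
rewrite mod0n modn_small; lia.
Qed.

Lemma sq_m_root (K : fieldType) (m : nat) (theta : K) (c : K) :
  (2 * m.+1).-primitive_root theta -> sq c m.+1 = 0 ->
  exists i, [/\ (1 <= i)%N, (i <= m)%N & c = theta ^+ i + theta ^- i].
Proof.
move=> Hth Hc.
set rs := [seq theta ^+ i + theta ^- i | i <- iota 1 m].
have [Hs Hl] := sq_size K m.
have HP0 : sq ('X : {poly K}) m.+1 != 0 by rewrite -size_poly_eq0 Hs.
have Hin : c \in rs.
  apply/negPn/negP => Hnot.
  have := max_poly_roots (rs := c :: rs) HP0.
  rewrite Hs /= size_map size_iota ltnn.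
  have Hroot x : root (sq ('X : {poly K}) m.+1) x = (sq x m.+1 == 0) by rewrite /root sq_horner.
  rewrite Hroot Hc eqxx /= Hnot /=.
  have -> : all (root (sq 'X m.+1)) rs.
    apply/allP => x /mapP [i]; rewrite mem_iota => Hi ->.
    by rewrite Hroot sq_theta_root //; lia.
  have -> : uniq rs.
    rewrite map_inj_in_uniq ?iota_uniq // => i j; rewrite !mem_iota => Hi Hj.
    by apply: theta_inj Hth _ _; lia.
  by move=> H; have := H isT isT.
move: Hin => /mapP [i]; rewrite mem_iota => Hi ->.
by exists i; split => //; lia.
Qed.

Lemma sq_N_root (K : fieldType) (p r m : nat) (c : K) :
  p \in [pchar K] -> odd p -> (1 <= r)%N ->
  sq c (p ^ r * m.+1) = 0 <-> [\/ c = 2, c = -2 | sq c m.+1 = 0].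
Proof.
move=> Hp Hodd Hr.
have Hq : (0 < p ^ r)%N by rewrite expn_gt0 prime_gt0 // (pcharf_prime Hp).
have HN : (p ^ r * m.+1)%:R = 0 :> K.
  apply/eqP; rewrite -(dvdn_pcharf Hp); apply: dvdn_mulr.
  by rewrite -[p in (p %| _)%N]expn1 dvdn_exp2l.
rewrite mulnC sq_mul //; split.
  move/eqP; rewrite mulf_eq0 expf_eq0 Hq /= => /orP [/eqP H|/eqP H].
    by constructor 3.
  by case: (sq_pr_root Hp Hodd H) => ->; [constructor 1 | constructor 2].
case=> [->|->|->]; last by rewrite expr0n (gtn_eqF Hq) mul0r.
  by rewrite -sq_mul // mulnC sq_two HN.
by rewrite -sq_mul // mulnC sq_neg sq_two HN mulr0.
Qed.


Lemma sum_delta (K : comNzRingType) (w : nat -> K) N j0 :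
  \sum_(k < N) w k * (k == j0 :> nat)%:R = if (j0 < N)%N then w j0 else 0.
Proof.
elim: N => [|N IH]; first by rewrite big_ord0.
rewrite big_ord_recr /= IH ltnS.
by case: (ltngtP j0 N) => [H|H|->]; rewrite ?mulr0 ?addr0 ?mulr1 ?add0r.
Qed.

Definition wv (K : pzRingType) n (v : 'rV[K]_n.+1) (k : nat) : K :=
  if (k < n.+1)%N then v 0 (inord k) else 0.

Definition prevw (K : pzRingType) (w : nat -> K) (j : nat) : K :=
  if j is j'.+1 then w j' else 0.

Lemma eig_entry (K : comNzRingType) n (v : 'rV[K]_n.+1) (al be la : K) (j : 'I_n.+1) :
  (v *m (hatT n.+1 al be - la%:M)) 0 j =
  (al - la) * wv v j + be * prevw (wv v) j + be * wv v j.+1.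
Proof.
rewrite mxE.
have E : forall k : 'I_n.+1, v 0 k * (hatT n.+1 al be - la%:M) k j =
   (al - la) * (wv v k * (k == j :> nat)%:R) + be * (wv v k * (k.+1 == j :> nat)%:R)
   + be * (wv v k * (j.+1 == k :> nat)%:R).
  move=> k; rewrite !mxE /wv ltn_ord inord_val.
  case: (eqVneq k j) => [->|Hkj].
    have -> : (j.+1 == j :> nat) = false by lia.
    by rewrite eqxx /= mulr1n; ring.
  have Hkj' : (k == j :> nat) = false by apply/negbTE.
  rewrite Hkj' mulr0n subr0.
  case E2: (k.+1 == j :> nat); case E3: (j.+1 == k :> nat) => /=; try ring.
  by move/eqP: E2 => E2; move/eqP: E3 => E3; lia.
rewrite (eq_bigr _ (fun k _ => E k)) !big_split /= -!big_distrr /= !sum_delta ltn_ord.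
have S3 : \sum_(i < n.+1) wv v i * (j.+1 == i :> nat)%:R = wv v j.+1.
  rewrite (eq_bigr (fun i : 'I_n.+1 => wv v i * (i == j.+1 :> nat)%:R)).
    by rewrite sum_delta /wv; case: ifP => H; rewrite ?H.
  by move=> i _; rewrite eq_sym.
have S2 : \sum_(i < n.+1) wv v i * (i.+1 == j :> nat)%:R = prevw (wv v) j.
  case: j {E S3} => [[|j'] Hj] /=.
    by rewrite big1 // => i _; rewrite mulr0.
  rewrite (eq_bigr (fun i : 'I_n.+1 => wv v i * (i == j' :> nat)%:R)) //.
  by rewrite sum_delta ifT //; lia.
by rewrite S2 S3.
Qed.

Lemma rec_iff (K : fieldType) (al be la x y z : K) : be != 0 ->
  ((al - la) * x + be * y + be * z == 0) = (z == (la - al) / be * x - y).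
Proof.
move=> Hbe.
have -> : (al - la) * x + be * y + be * z = be * (z - ((la - al) / be * x - y)) by field.
by rewrite mulf_eq0 (negbTE Hbe) /= subr_eq0.
Qed.

Lemma det_eig (K : fieldType) n (al be la : K) : be != 0 ->
  (\det (hatT n.+1 al be - la%:M) == 0) = (sq ((la - al) / be) n.+2 == 0).
Proof.
move=> Hbe; set c := (la - al) / be; set A := hatT n.+1 al be - la%:M.
apply/idP/idP.
  move/det0P => [v Hv0 HvA].
  set w := wv v.
  have Hrec j : (j < n.+1)%N -> w j.+1 = c * w j - prevw w j.
    move=> Hj; apply/eqP; rewrite -rec_iff // -(eig_entry v al be la (Ordinal Hj)).
    by rewrite -/A HvA mxE.
  have Hind j : (j < n.+1)%N -> w j = w 0%N * sq c j.+1 /\ w j.+1 = w 0%N * sq c j.+2.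
    elim: j => [|j IH] Hj.
      by rewrite sq1 mulr1 Hrec //; split=> //; rewrite sqS sq1 sq0 /= mulr1 !subr0 mulrC.
    have [IH1 IH2] := IH (ltnW Hj); split=> //.
    by rewrite Hrec // IH2 /= IH1 [sq c j.+3]sqS; ring.
  have [_ HN] := Hind n (ltnSn n).
  have Hw0 : w n.+1 = 0 by rewrite /w /wv ltnn.
  rewrite Hw0 in HN.
  move/esym/eqP: HN; rewrite mulf_eq0 => /orP [/eqP H0|//].
  case/negP: Hv0; apply/eqP/rowP => k; rewrite mxE.
  have [Hk _] := Hind k (ltn_ord k).
  by move: Hk; rewrite H0 mul0r /w /wv ltn_ord inord_val => ->.
move=> /eqP Hs; apply/det0P.
exists (\row_(k < n.+1) sq c k.+1).
  apply/negP => /eqP /rowP /(_ 0); rewrite !mxE sq1 => /eqP; rewrite oner_eq0.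
  by [].
apply/rowP => j; rewrite eig_entry mxE; apply/eqP; rewrite rec_iff // -/c.
have Hw k : wv (\row_(k < n.+1) sq c k.+1) k = if (k < n.+1)%N then sq c k.+1 else 0.
  by rewrite /wv; case: ifP => H //; rewrite mxE inordK.
have Hprev : prevw (wv (\row_(k < n.+1) sq c k.+1)) j = sq c j.
  case: j => [[|j'] Hj] //=; rewrite Hw ifT //; lia.
rewrite Hprev !Hw ltn_ord.
case: ifP => H; first by rewrite sqS.
have -> : (j : nat) = n by move: H (ltn_ord j); lia.
by rewrite -sqS Hs.
Qed.


Lemma LCD_det (F : fieldType) n (T : 'M[F]_n) : T^T = T ->
  is_LCD (row_mx 1%:M T) <-> \det (1%:M + T *m T) != 0.
Proof.
move=> HT.
set G := row_mx 1%:M T.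
have HGG : G *m G^T = 1%:M + T *m T.
  by rewrite /G tr_row_mx mul_row_col trmx1 mul1mx HT.
rewrite /is_LCD /dual_code; split.
  move=> H; apply/negP => /det0P [u Hu0 Hu].
  have Hv : (u *m G <= G :&: kermx G^T)%MS.
    rewrite sub_capmx submxMl /=; apply/sub_kermxP.
    by rewrite -mulmxA HGG.
  move: Hv; rewrite H submx0 /G mul_mx_row mulmx1 row_mx_eq0 => /andP [Hu1 _].
  by rewrite Hu1 in Hu0.
move=> Hdet; apply/eqP; rewrite -submx0.
have [D HD] : exists D, (G :&: kermx G^T)%MS = D *m G by apply/submxP; exact: capmxSl.
have HK : (G :&: kermx G^T)%MS *m G^T = 0 by apply/sub_kermxP; exact: capmxSr.
have HU : (1%:M + T *m T) \in unitmx by rewrite unitmxE unitfE.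
rewrite HD in HK *; rewrite -mulmxA HGG in HK.
have -> : D = 0 by rewrite -(mulmxK HU D) HK mul0mx.
by rewrite mul0mx sub0mx.
Qed.

Lemma hatT_tr (F : ringType) n (a b : F) : (hatT n a b)^T = hatT n a b.
Proof.
apply/matrixP => i j; rewrite !mxE eq_sym; case: (i == j) => //.
by rewrite orbC.
Qed.

Lemma hatT_map (F L : fieldType) (f : {rmorphism F -> L}) n (a b : F) :
  map_mx f (hatT n a b) = hatT n (f a) (f b).
Proof.
apply/matrixP => i j; rewrite !mxE.
by case: (i == j) => //; case: (_ || _) => //; rewrite rmorph0.
Qed.


Lemma key_LCD (F : finFieldType) (L : fieldType) (iota : {rmorphism F -> L})
  (a b : F) (Hb : b != 0) n (mu : L) (Hmu : mu ^+ 2 = -1) :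
  is_LCD (hatG n.+1 a b) <->
  ~ (sq ((- mu - iota a) / iota b) n.+2 = 0 \/ sq ((mu - iota a) / iota b) n.+2 = 0).
Proof.
have Hb' : iota b != 0 by rewrite fmorph_eq0.
rewrite /hatG LCD_det ?hatT_tr //.
rewrite -(fmorph_eq0 iota) -det_map_mx map_mxD map_mx1 map_mxM hatT_map.
set T := hatT n.+1 (iota a) (iota b).
have -> : 1%:M + T *m T = (T - (- mu)%:M) *m (T - mu%:M).
  rewrite !mulmxE mulrBl !mulrBr -!mulmxE scalar_mxC -scalar_mxM.
  have -> : - mu * mu = 1 by rewrite mulNr -expr2 Hmu opprK.
  by rewrite !mul_scalar_mx scaleNr opprB opprK addrCA subrK.
rewrite det_mulmx mulf_eq0 negb_or !det_eig //.
split.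
  move=> /andP [H1 H2] [/eqP H|/eqP H]; [by rewrite H in H1 | by rewrite H in H2].
move=> H; apply/andP; split; apply/negP => /eqP H'; apply: H; [left | right] => //.
Qed.

Unset Implicit Arguments.
Theorem theorem2p10
  (F : finFieldType) (p : nat) (Hp : prime p) (Hodd : odd p)
  (HcharF : p \in [pchar F])
  (a b : F) (Hb : b != 0)
  (n : nat) (Hn : (2 <= n)%N)
  (r m : nat)
  (Hr1 : (p ^ r %| n.+1)%N) (Hr2 : ~~ (p ^ r.+1 %| n.+1)%N)
  (Hm : n.+1 = (p ^ r * m.+1)%N)
  (Hr : (1 <= r)%N)
  (L : fieldType) (iota : {rmorphism F -> L})
  (mu : L) (Hmu : mu ^+ 2 = -1) :
  ((0 < m)%N ->
   forall theta : L, (2 * m.+1).-primitive_root theta ->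
   (is_LCD (hatG n a b) <->
    ~ (iota (a / b) = - mu / iota b + 2
       \/ iota (a / b) = - mu / iota b - 2
       \/ iota (a / b) = mu / iota b + 2
       \/ iota (a / b) = mu / iota b - 2
       \/ (exists i : nat, [/\ (1 <= i)%N, (i <= m)%N &
            iota (a / b) = - mu / iota b + theta ^+ i + theta ^- i])
       \/ (exists i : nat, [/\ (1 <= i)%N, (i <= m)%N &
            iota (a / b) = mu / iota b + theta ^+ i + theta ^- i]))))
  /\
  (m = 0%N ->
   (is_LCD (hatG n a b) <->
    ~ (iota (a / b) = - mu / iota b + 2
       \/ iota (a / b) = - mu / iota b - 2
       \/ iota (a / b) = mu / iota b + 2
       \/ iota (a / b) = mu / iota b - 2))).
Proof.
case: n Hn Hr1 Hr2 Hm => [//|n] Hn Hr1 Hr2 Hm.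
have Hp' : p \in [pchar L] := rmorph_pchar iota HcharF.
have Hb' : iota b != 0 by rewrite fmorph_eq0.
have KEY := key_LCD iota a Hb n Hmu.
rewrite Hm in KEY; rewrite fmorph_div.
set al := iota a in KEY *; set be := iota b in KEY Hb' *.
set c1 := (- mu - al) / be in KEY *; set c2 := (mu - al) / be in KEY *.
have HP c := @sq_N_root L p r m c Hp' Hodd Hr.
have Hneg (c : L) : [\/ c = 2, c = -2 | sq c m.+1 = 0] <-> [\/ -c = 2, -c = -2 | sq (-c) m.+1 = 0].
  rewrite sq_neg; split.
    case=> [->|->|->]; [constructor 2 | constructor 1 | constructor 3] => //.
    - by rewrite opprK.
    - by rewrite mulr0.
  case=> [H|H|/eqP H].
  - by constructor 2; rewrite -H opprK.
  - by constructor 1; rewrite -[c]opprK H opprK.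
  - constructor 3; apply/eqP; move: H; rewrite mulf_eq0 expf_eq0 /= => /orP [|//].
    by rewrite oppr_eq0 oner_eq0.
have EA (d : L) : (al / be = - mu / be + d) <-> (d = - c1).
  split=> [H|->]; last by rewrite /c1; field.
  by apply: (addrI (- mu / be)); rewrite -H /c1; field.
have EB (d : L) : (al / be = mu / be + d) <-> (d = - c2).
  split=> [H|->]; last by rewrite /c2; field.
  by apply: (addrI (mu / be)); rewrite -H /c2; field.
split.
  move=> Hm0 theta Hth.
  have HT (x : L) : sq x m.+1 = 0 <-> exists i, [/\ (1 <= i)%N, (i <= m)%N & x = theta ^+ i + theta ^- i].
    split; first exact: sq_m_root.
    by case=> i [Hi1 Hi2 ->]; apply: sq_theta_root => //; rewrite Hi1 Hi2.
  have L1 : sq c1 (p ^ r * m.+1) = 0 <->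
     (al / be = - mu / be + 2 \/ al / be = - mu / be - 2 \/
      exists i, [/\ (1 <= i)%N, (i <= m)%N & al / be = - mu / be + theta ^+ i + theta ^- i]).
    split.
      move/HP/Hneg => [H|H|/HT [i [Hi1 Hi2 Hi]]].
      - by left; apply/EA; rewrite H.
      - by right; left; apply/EA; rewrite H.
      - by right; right; exists i; split => //; rewrite -addrA; apply/EA; rewrite Hi.
    case=> [H|[H|[i [Hi1 Hi2 Hi]]]]; apply/HP/Hneg.
    - by constructor 1; move/EA: H => <-.
    - by constructor 2; move/EA: H => <-.
    - rewrite -addrA in Hi; move/EA: Hi => Hi.
      by constructor 3; apply/HT; exists i; split => //; rewrite Hi.
  have L2 : sq c2 (p ^ r * m.+1) = 0 <->
     (al / be = mu / be + 2 \/ al / be = mu / be - 2 \/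
      exists i, [/\ (1 <= i)%N, (i <= m)%N & al / be = mu / be + theta ^+ i + theta ^- i]).
    split.
      move/HP/Hneg => [H|H|/HT [i [Hi1 Hi2 Hi]]].
      - by left; apply/EB; rewrite H.
      - by right; left; apply/EB; rewrite H.
      - by right; right; exists i; split => //; rewrite -addrA; apply/EB; rewrite Hi.
    case=> [H|[H|[i [Hi1 Hi2 Hi]]]]; apply/HP/Hneg.
    - by constructor 1; move/EB: H => <-.
    - by constructor 2; move/EB: H => <-.
    - rewrite -addrA in Hi; move/EB: Hi => Hi.
      by constructor 3; apply/HT; exists i; split => //; rewrite Hi.
  clear -KEY L1 L2; tauto.
move=> Hm0; subst m.
have H1 : sq (- c1) 1 <> 0 by rewrite sq1; apply/eqP; exact: oner_neq0.
have H2 : sq (- c2) 1 <> 0 by rewrite sq1; apply/eqP; exact: oner_neq0.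
have L1 : sq c1 (p ^ r * 1) = 0 <-> (al / be = - mu / be + 2 \/ al / be = - mu / be - 2).
  split.
    by move/HP/Hneg => [H|H|//]; [left | right]; apply/EA; rewrite H.
  by case=> H; apply/HP/Hneg; move/EA: H => <-; [constructor 1 | constructor 2].
have L2 : sq c2 (p ^ r * 1) = 0 <-> (al / be = mu / be + 2 \/ al / be = mu / be - 2).
  split.
    by move/HP/Hneg => [H|H|//]; [left | right]; apply/EB; rewrite H.
  by case=> H; apply/HP/Hneg; move/EB: H => <-; [constructor 1 | constructor 2].
clear -KEY L1 L2; tauto.
Qed.
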